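(* For all finite sets of formulas $\Gamma,\Delta$: if $\Gamma\Vdash\Delta$, then the sequent $\Gamma\Rightarrow\Delta$ is provable in $\mathsf{CLp}$.
   Context: Fix a countably infinite set $\mathsf{At}$ of atoms. Formulas are built from atoms and the constant $\bot$ using the binary connectives $\land,\lor,\to$. All contexts are finite sets (not multisets) of formulas; a comma denotes union; a subscript $\mathsf{At}$ indicates a finite set of atoms. An atomic sequent has the form $\Gamma_{\mathsf{At}} \Rightarrow \Delta_{\mathsf{At}}$. An atomic rule has finitely many (possibly zero) atomic sequents as premises and one atomic sequent as conclusion; a rule with zero premises is an atomic axiom. A base is a (possibly empty) set of atomic rules; $\mathcal{C}\supseteq\mathcal{B}$ ($\mathcal{C}$ extends $\mathcal{B}$) if $\mathcal{C}$ contains every rule of $\mathcal{B}$. Derivability $\vdash_{\mathcal{B}}$ of atomic sequents is the least relation such that: (Axiom/Weakening) if an atomic axiom with conclusion $\Gamma_{\mathsf{At}}\Rightarrow\Delta_{\mathsf{At}}$ is in $\mathcal{B}$, then $\vdash_{\mathcal{B}} \Theta_{\mathsf{At}},\Gamma_{\mathsf{At}}\Rightarrow\Delta_{\mathsf{At}},\Sigma_{\mathsf{At}}$ for all sets of atoms $\Theta_{\mathsf{At}},\Sigma_{\mathsf{At}}$; (Mix) if a rule with premises $\Gamma^i_{\mathsf{At}}\Rightarrow\Delta^i_{\mathsf{At}}$ ($1\le i\le n$) and conclusion $\Gamma_{\mathsf{At}}\Rightarrow\Delta_{\mathsf{At}}$ is in $\mathcal{B}$ and $\vdash_{\mathcal{B}}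 \Theta^i_{\mathsf{At}},\Gamma^i_{\mathsf{At}}\Rightarrow\Delta^i_{\mathsf{At}},\Sigma^i_{\mathsf{At}}$ for each $i$, then $\vdash_{\mathcal{B}} \Theta^1_{\mathsf{At}},\dots,\Theta^n_{\mathsf{At}},\Gamma_{\mathsf{At}}\Rightarrow\Delta_{\mathsf{At}},\Sigma^1_{\mathsf{At}},\dots,\Sigma^n_{\mathsf{At}}$. Support $\Vdash_{\mathcal{B}}$: (At) $\Vdash_{\mathcal{B}}\Gamma_{\mathsf{At}}$ iff $\vdash_{\mathcal{B}}\ \Rightarrow\Gamma_{\mathsf{At}}$; ($\land$) $\Vdash_{\mathcal{B}} A\land B,\Gamma$ iff $\Vdash_{\mathcal{B}}A,\Gamma$ and $\Vdash_{\mathcal{B}}B,\Gamma$; ($\lor$) $\Vdash_{\mathcal{B}}A\lor B,\Gamma$ iff $\Vdash_{\mathcal{B}}A,B,\Gamma$; ($\to$) $\Vdash_{\mathcal{B}}A\to B,\Gamma$ iff $A\Vdash_{\mathcal{B}}B,\Gamma$; ($\bot$) $\Vdash_{\mathcal{B}}\bot,\Gamma$ iff $\Vdash_{\mathcal{B}}\Gamma$; (Inf) for $n\ge1$, $\{A^1,\dots,A^n\}\Vdash_{\mathcal{B}}\Delta$ iff for every $\mathcal{C}\supseteq\mathcal{B}$ and all sets of atoms $\Theta^1_{\mathsf{At}},\dots,\Theta^n_{\mathsf{At}}$, if $\Vdash_{\mathcal{C}}\Theta^i_{\mathsf{At}},A^i$ for all $i$ then $\Vdash_{\mathcal{C}}\Theta^1_{\mathsf{At}},\dots,\Theta^n_{\mathsf{At}},\Delta$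 (and $\varnothing\Vdash_{\mathcal{B}}\Delta$ means $\Vdash_{\mathcal{B}}\Delta$). The atomic identity rule $\mathsf{Ainit}$ is the atomic axiom $\Gamma_{\mathsf{At}},p\Rightarrow p,\Delta_{\mathsf{At}}$; the atomic cut rule $\mathsf{Acut}$ has premises $\Gamma^1_{\mathsf{At}}\Rightarrow\Delta^1_{\mathsf{At}},p$ and $p,\Gamma^2_{\mathsf{At}}\Rightarrow\Delta^2_{\mathsf{At}}$ and conclusion $\Gamma^1_{\mathsf{At}},\Gamma^2_{\mathsf{At}}\Rightarrow\Delta^1_{\mathsf{At}},\Delta^2_{\mathsf{At}}$. $\mathcal{ST}$ is the base consisting of all instances of $\mathsf{Ainit}$ and $\mathsf{Acut}$. Validity: $\Gamma\Vdash\Delta$ iff $\Gamma\Vdash_{\mathcal{B}}\Delta$ for every base $\mathcal{B}\supseteq\mathcal{ST}$. $\mathsf{CLp}$ is the sequent calculus on sequents $\Gamma\Rightarrow\Delta$ (finite sets of formulas) with rules: $\mathsf{init}$: $\Gamma,A\Rightarrow A,\Delta$; $L\bot$: $\Gamma,\bot\Rightarrow\Delta$; $R\bot$: from $\Gamma\Rightarrow\Delta$ infer $\Gamma\Rightarrow\bot,\Delta$; $L\land$: from $A,B,\Gamma\Rightarrow\Delta$ infer $A\land B,\Gamma\Rightarrow\Delta$; $R\land$: from $\Gamma\Rightarrow\Delta,A$ and $\Gamma'\Rightarrow\Delta',B$ infer $\Gamma,\Gamma'\Rightarrow\Delta,\Delta',A\land B$; $L\lor$: from $A,\Gamma\Rightarrow\Delta$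 and $B,\Gamma'\Rightarrow\Delta'$ infer $A\lor B,\Gamma,\Gamma'\Rightarrow\Delta,\Delta'$; $R\lor$: from $\Gamma\Rightarrow\Delta,A,B$ infer $\Gamma\Rightarrow\Delta,A\lor B$; $L\to$: from $\Gamma\Rightarrow\Delta,A$ and $B,\Gamma'\Rightarrow\Delta'$ infer $A\to B,\Gamma,\Gamma'\Rightarrow\Delta,\Delta'$; $R\to$: from $A,\Gamma\Rightarrow\Delta,B$ infer $\Gamma\Rightarrow\Delta,A\to B$. *)

(* Defs.v *)
From Stdlib Require Import List Arith.
Import ListNotations.

Definition atom := nat.

Inductive form : Type :=
| Atom : atom -> form
| Bot  : form
| And  : form -> form -> form
| Or   : form -> form -> form
| Imp  : form -> form -> form.

Definition form_eq_dec : forall x y : form, {x = y} + {x <> y}.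
Proof. decide equality; apply Nat.eq_dec. Defined.

(** Finite sets are represented by lists; two lists denote the same set
    when they have the same members. *)
Definition seteq {T : Type} (l l' : list T) : Prop := forall x, In x l <-> In x l'.

Definition asequent := (list atom * list atom)%type.
Record arule := mkRule { prem : list asequent ; concl : asequent }.

Definition base := arule -> Prop.
Definition extends (C B : base) : Prop := forall r, B r -> C r.

(** Derivability |-_B of atomic sequents (Axiom/Weakening and Mix);
    conclusions are taken up to set equality. *)
Inductive derivable (B : base) : list atom -> list atom -> Prop :=
| d_axiom : forall r G D Th Si L R,
    B r -> prem r = [] -> concl r = (G, D) ->
    seteq L (Th ++ G) -> seteq R (D ++ Si) ->
    derivable B L R
| d_mix : forall r G D (ws : list (list atom * list atom)) L R,
    B r -> concl r = (G, D) ->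
    Forall2 (fun (p : asequent) (w : list atom * list atom) =>
               derivable B (fst w ++ fst p) (snd p ++ snd w)) (prem r) ws ->
    seteq L (concat (map fst ws) ++ G) ->
    seteq R (D ++ concat (map snd ws)) ->
    derivable B L R.

Inductive ST : base :=
| ST_init : forall G D p, ST (mkRule [] (G ++ [p], p :: D))
| ST_cut : forall G1 D1 G2 D2 p,
    ST (mkRule [(G1, D1 ++ [p]); (p :: G2, D2)] (G1 ++ G2, D1 ++ D2)).

Fixpoint fsize (A : form) : nat :=
  match A with
  | Atom _ => 0
  | Bot => 1
  | And A B | Or A B | Imp A B => S (fsize A + fsize B)
  end.

Definition weight (l : list form) : nat := fold_right (fun A n => fsize A + n) 0 l.

Fixpoint first_nonatomic (l : list form) : option form :=
  match l with
  | [] => None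
  | Atom _ :: l' => first_nonatomic l'
  | A :: _ => Some A
  end.

Fixpoint atoms_of (l : list form) : list atom :=
  match l with
  | [] => []
  | Atom p :: l' => p :: atoms_of l'
  | _ :: l' => atoms_of l'
  end.

Definition atomsF (Th : list atom) : list form := map Atom Th.

(** [supp k B l]: support of the set [l] in base [B], computed with fuel [k]
    (always called with fuel >= weight, so fuel never runs out). A non-atomic
    formula X of the set is chosen (the first one in the list) and the
    corresponding clause is applied to X, Gamma where Gamma is the set minus X. *)
Fixpoint supp (k : nat) (B : base) (l : list form) {struct k} : Prop :=
  match first_nonatomic l with
  | None => derivable B [] (atoms_of l)
  | Some X =>
      match k with
      | 0 => False
      | S k' =>
          let G := remove form_eq_dec X l in
          match X with
          | And A1 A2 => supp k' B (A1 :: G) /\ supp k' B (A2 :: G)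
          | Or A1 A2 => supp k' B (A1 :: A2 :: G)
          | Bot => supp k' B G
          | Imp A1 A2 =>                                             (* (->) + (Inf), n = 1 *)
              forall C : base, extends C B ->
              forall Th : list atom,
                supp k' C (atomsF Th ++ [A1]) ->
                supp k' C (atomsF Th ++ A2 :: G)
          | Atom _ => True (* unreachable *)
          end
      end
  end.

Definition supports (B : base) (l : list form) : Prop := supp (weight l) B l.

Definition infers (B : base) (G D : list form) : Prop :=
  match G with
  | [] => supports B D
  | _ => forall C : base, extends C B ->
         forall Ths : list (list atom),
           Forall2 (fun Th A => supports C (atomsF Th ++ [A])) Ths G ->
           supports C (atomsF (concat Ths) ++ D)
  end.

(** Validity: Gamma ||- Delta iff Gamma ||-_B Delta for every B extending ST.
    Gamma is read as a set (duplicates removed). *)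
Definition valid (G D : list form) : Prop :=
  forall B : base, extends B ST -> infers B (nodup form_eq_dec G) D.

Inductive CLp : list form -> list form -> Prop :=
| c_set : forall G D G' D', CLp G D -> seteq G G' -> seteq D D' -> CLp G' D'
| c_init : forall G D A, CLp (A :: G) (A :: D)
| c_Lbot : forall G D, CLp (Bot :: G) D
| c_Rbot : forall G D, CLp G D -> CLp G (Bot :: D)
| c_Land : forall A B G D, CLp (A :: B :: G) D -> CLp (And A B :: G) D
| c_Rand : forall A B G D G' D',
    CLp G (A :: D) -> CLp G' (B :: D') -> CLp (G ++ G') (And A B :: D ++ D')
| c_Lor : forall A B G D G' D',
    CLp (A :: G) D -> CLp (B :: G') D' -> CLp (Or A B :: G ++ G') (D ++ D')
| c_Ror : forall A B G D, CLp G (A :: B :: D) -> CLp G (Or A B :: D)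
| c_Limp : forall A B G D G' D',
    CLp G (A :: D) -> CLp (B :: G') D' -> CLp (Imp A B :: G ++ G') (D ++ D')
| c_Rimp : forall A B G D, CLp (A :: G) (B :: D) -> CLp G (Imp A B :: D).

(* Main.v *)
Require Import Defs.
From Stdlib Require Import List Arith Lia Classical Bool.
Import ListNotations.

Fixpoint derivable_ind2 (B : base) (P : list atom -> list atom -> Prop)
  (Hax : forall r G D Th Si L R, B r -> prem r = [] -> concl r = (G, D) ->
     seteq L (Th ++ G) -> seteq R (D ++ Si) -> P L R)
  (Hmix : forall r G D (ws : list (list atom * list atom)) L R,
     B r -> concl r = (G, D) ->
     Forall2 (fun (p : asequent) (w : list atom * list atom) =>
               P (fst w ++ fst p) (snd p ++ snd w)) (prem r) ws ->
     seteq L (concat (map fst ws) ++ G) ->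
     seteq R (D ++ concat (map snd ws)) -> P L R)
  L R (H : derivable B L R) {struct H} : P L R :=
  match H with
  | d_axiom _ r G D Th Si L R Br Hp Hc HL HR => Hax r G D Th Si L R Br Hp Hc HL HR
  | d_mix _ r G D ws L R Br Hc HF HL HR =>
      Hmix r G D ws L R Br Hc
        ((fix f ps ws' (F : Forall2 (fun (p : asequent) (w : list atom * list atom) =>
               derivable B (fst w ++ fst p) (snd p ++ snd w)) ps ws')
           : Forall2 (fun (p : asequent) (w : list atom * list atom) =>
               P (fst w ++ fst p) (snd p ++ snd w)) ps ws' :=
           match F with
           | Forall2_nil _ => Forall2_nil _
           | Forall2_cons x y h t => Forall2_cons x y (derivable_ind2 B P Hax Hmix _ _ h) (f _ _ t)
           end) _ _ HF) HL HR
  end.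

Lemma seteq_trans {T} (a b c : list T) : seteq a b -> seteq b c -> seteq a c.
Proof. unfold seteq; intros H1 H2 x; rewrite H1; apply H2. Qed.
Lemma seteq_sym {T} (a b : list T) : seteq a b -> seteq b a.
Proof. unfold seteq; intros H x; rewrite H; tauto. Qed.
Lemma seteq_refl {T} (a : list T) : seteq a a.
Proof. unfold seteq; tauto. Qed.

Lemma derivable_seteq B L R L' R' : derivable B L R -> seteq L L' -> seteq R R' -> derivable B L' R'.
Proof.
  intros H H1 H2; destruct H.
  - eapply d_axiom; eauto; eapply seteq_trans; eauto using seteq_sym.
  - eapply d_mix; eauto; eapply seteq_trans; eauto using seteq_sym.
Qed.

Lemma derivable_mono B C L R : extends C B -> derivable B L R -> derivable C L R.
Proof.
  intros E H; induction H using derivable_ind2.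
  - eapply d_axiom; eauto.
  - eapply d_mix; eauto.
Qed.

Lemma derivable_wkR B L R S : derivable B L R -> derivable B L (R ++ S).
Proof.
  intros H; revert S; induction H using derivable_ind2; intros S.
  - eapply d_axiom with (Si := Si ++ S); eauto.
    intro x; specialize (H3 x); rewrite !in_app_iff in *; tauto.
  - destruct ws as [|w ws].
    + inversion H1; subst. eapply d_axiom with (Th := []) (Si := S); eauto.
      intro x; specialize (H3 x); simpl in *; rewrite !in_app_iff in *; simpl in *; tauto.
    + inversion H1; subst.
      eapply d_mix with (ws := (fst w, snd w ++ S) :: ws); eauto.
      * rewrite <- H4; constructor; [simpl; rewrite app_assoc; apply H7|].
        eapply Forall2_impl; [|exact H8]; intros a b Hab; simpl.
        rewrite <- (app_nil_r (snd a ++ snd b)); auto.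
      * intro y; specialize (H3 y); simpl in *; rewrite !in_app_iff in *; tauto.
Qed.

Fixpoint eval (v : atom -> bool) (A : form) : bool :=
  match A with
  | Atom p => v p
  | Bot => false
  | And A B => eval v A && eval v B
  | Or A B => eval v A || eval v B
  | Imp A B => implb (eval v A) (eval v B)
  end.

Inductive Bv (v : atom -> bool) : base :=
| bv_st r : ST r -> Bv v r
| bv_t p : v p = true -> Bv v (mkRule [] ([], [p]))
| bv_f p : v p = false -> Bv v (mkRule [] ([p], [])).

Definition sat (v : atom -> bool) (L R : list atom) : Prop :=
  (exists p, In p L /\ v p = false) \/ (exists p, In p R /\ v p = true).

Lemma sound v L R : derivable (Bv v) L R -> sat v L R.
Proof.
  intros H; induction H using derivable_ind2; unfold sat in *.
  - destruct H as [r Hr| p Hp | p Hp].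
    + destruct Hr as [G0 D0 p | ]; simpl in *; [|discriminate].
      injection H1; intros; subst.
      destruct (v p) eqn:E.
      * right; exists p; split; auto; apply H3; simpl; auto.
      * left; exists p; split; auto; apply H2; rewrite !in_app_iff; simpl; auto.
    + simpl in *; injection H1; intros; subst. right; exists p; split; auto; apply H3; simpl; auto.
    + simpl in *; injection H1; intros; subst. left; exists p; split; auto; apply H2; rewrite !in_app_iff; simpl; auto.
  - destruct H as [r Hr| p Hp | p Hp].
    + destruct Hr as [G0 D0 p | G1 D1 G2 D2 p]; simpl in *.
      * inversion H1; subst. simpl in *. injection H0; intros; subst.
        destruct (v p) eqn:E.
        -- right; exists p; split; auto; apply H3; simpl; auto.
        -- left; exists p; split; auto; apply H2; rewrite !in_app_iff; simpl; auto.
      * injection H0; intros; subst.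
        inversion H1 as [|x w1 l ws' Hw1 Hrest]; subst.
        inversion Hrest as [|x' w2 l' ws'' Hw2 Hnil]; subst.
        inversion Hnil; subst. simpl in *.
        destruct (v p) eqn:E.
        -- destruct Hw2 as [[q [Hq1 Hq2]]|[q [Hq1 Hq2]]].
           ++ assert (p <> q) by (intro; subst; congruence).
              left; exists q; split; auto; apply H2; rewrite !in_app_iff in *; simpl in *; tauto.
           ++ right; exists q; split; auto; apply H3; rewrite !in_app_iff in *; tauto.
        -- destruct Hw1 as [[q [Hq1 Hq2]]|[q [Hq1 Hq2]]].
           ++ left; exists q; split; auto; apply H2; rewrite !in_app_iff in *; tauto.
           ++ assert (p <> q) by (intro; subst; congruence).
              right; exists q; split; auto; apply H3; rewrite !in_app_iff in *; simpl in *; tauto.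
    + simpl in *; inversion H1; subst. injection H0; intros; subst.
      right; exists p; split; auto; apply H3; simpl; auto.
    + simpl in *; inversion H1; subst. injection H0; intros; subst.
      left; exists p; split; auto; apply H2; simpl; auto.
Qed.

Lemma fna_some l X : first_nonatomic l = Some X -> In X l /\ (forall p, X <> Atom p).
Proof.
  induction l as [|a l IH]; simpl; [discriminate|].
  destruct a; intros H; try (injection H; intros; subst; split; [left; auto| intros; discriminate]).
  destruct (IH H); auto.
Qed.

Lemma fna_none l : first_nonatomic l = None -> forall A, In A l -> exists p, A = Atom p.
Proof.
  induction l as [|a l IH]; simpl; [tauto|].
  destruct a; intros H; try discriminate.
  intros A [<-|HA]; eauto.
Qed.

Lemma atoms_of_in p l : In (Atom p) l -> In p (atoms_of l).
Proof.
  induction l as [|a l IH]; simpl; [tauto|].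
  intros [->|H]; [simpl; auto|]. destruct a; simpl; auto.
Qed.

Lemma atoms_of_in2 p l : In p (atoms_of l) -> In (Atom p) l.
Proof.
  induction l as [|a l IH]; simpl; [tauto|].
  destruct a; simpl; intuition (subst; auto).
Qed.

Lemma weight_app l1 l2 : weight (l1 ++ l2) = weight l1 + weight l2.
Proof. induction l1; simpl; auto. unfold weight in *; simpl; lia. Qed.

Lemma weight_atomsF Th : weight (atomsF Th) = 0.
Proof. induction Th; simpl; auto. Qed.

Lemma weight_remove_le X l : weight (remove form_eq_dec X l) <= weight l.
Proof.
  induction l as [|a l IH]; simpl; auto.
  destruct (form_eq_dec X a); simpl; unfold weight in *; lia.
Qed.

Lemma weight_remove_lt X l : In X l -> fsize X + weight (remove form_eq_dec X l) <= weight l.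
Proof.
  induction l as [|a l IH]; simpl; [tauto|].
  intros [Ha|H]; [subst a|].
  - destruct (form_eq_dec X X); [|congruence]. pose proof (weight_remove_le X l). unfold weight in *; lia.
  - destruct (form_eq_dec X a); simpl.
    + subst. pose proof (weight_remove_le a l). unfold weight in *; lia.
    + specialize (IH H). unfold weight in *; lia.
Qed.

Lemma fsize_pos X : (forall p, X <> Atom p) -> 1 <= fsize X.
Proof. destruct X; simpl; intros H; try lia. exfalso; eapply H; eauto. Qed.

Lemma elim_false v C : extends C (Bv v) -> forall Q, (forall q, In q Q -> v q = false) ->
  derivable C [] Q -> derivable C [] [].
Proof.
  intros E Q; induction Q as [|q Q IH]; intros HQ H; auto.
  apply IH; [intros; apply HQ; simpl; auto|].
  eapply d_mix with (r := mkRule [([], Q ++ [q]); ([q], [])] ([] ++ [], Q ++ []))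
    (ws := [([], []); ([], [])]).
  - apply E; apply bv_st; apply ST_cut.
  - reflexivity.
  - simpl. constructor; [|constructor; [|constructor]]; simpl.
    + eapply derivable_seteq; [exact H| apply seteq_refl|].
      intro x; simpl; rewrite !in_app_iff; simpl; tauto.
    + eapply d_axiom with (r := mkRule [] ([q], [])) (Th := []) (Si := []); simpl; eauto.
      apply E; apply bv_f; apply HQ; simpl; auto.
      apply seteq_refl. apply seteq_refl.
  - apply seteq_refl.
  - intro x; simpl; rewrite !in_app_iff; simpl; tauto.
Qed.

Ltac wr HX := pose proof (weight_remove_lt _ _ HX); simpl fsize in *.

Lemma incons : forall k C l, derivable C [] [] -> weight l <= k -> supp k C l.
Proof.
  induction k; intros C l H Hw; simpl; destruct (first_nonatomic l) as [X|] eqn:E.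
  - destruct (fna_some _ _ E) as [HX HA]. pose proof (fsize_pos _ HA).
    pose proof (weight_remove_lt X l HX); lia.
  - exact (derivable_wkR _ _ [] (atoms_of l) H).
  - destruct (fna_some _ _ E) as [HX HA].
    destruct X; try exact I; wr HX.
    + apply IHk; auto; lia.
    + split; apply IHk; auto; simpl; lia.
    + apply IHk; auto; simpl; lia.
    + intros C' HC Th _. apply IHk. eapply derivable_mono; eauto.
      rewrite weight_app, weight_atomsF; simpl; lia.
  - exact (derivable_wkR _ _ [] (atoms_of l) H).
Qed.

Lemma ext_trans C' C B : extends C' C -> extends C B -> extends C' B.
Proof. unfold extends; auto. Qed.

Lemma in_atomsF p Th : In p Th -> In (Atom p) (atomsF Th).
Proof. intros; unfold atomsF; apply in_map; auto. Qed.

Lemma TF v : forall k,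
 (forall C l, extends C (Bv v) -> weight l <= k ->
    (exists A, In A l /\ eval v A = true) -> supp k C l) /\
 (forall C l, extends C (Bv v) -> weight l <= k -> (forall A, In A l -> eval v A = false) ->
    supp k C l -> derivable C [] []).
Proof.
  assert (AT : forall C l, extends C (Bv v) -> first_nonatomic l = None ->
     (exists A, In A l /\ eval v A = true) -> derivable C [] (atoms_of l)).
  { intros C l HC E [A [HA HvA]].
    destruct (fna_none _ E _ HA) as [p ->]. simpl in HvA.
    eapply d_axiom with (r := mkRule [] ([], [p])) (Th := []) (Si := atoms_of l); simpl; eauto.
    apply HC; apply bv_t; auto. apply seteq_refl.
    intro x; simpl; split; [tauto|]. intros [<-|H]; auto. apply atoms_of_in; auto. }
  assert (AF : forall C l, extends C (Bv v) -> (forall A, In A l -> eval v A = false) ->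
     derivable C [] (atoms_of l) -> derivable C [] []).
  { intros C l HC Hf H. eapply elim_false; eauto.
    intros q Hq. apply (Hf (Atom q)). apply atoms_of_in2; auto. }
  induction k as [|k [IHT IHF]]; split; intros C l HC.
  - intros Hw Hex; simpl; destruct (first_nonatomic l) as [X|] eqn:E; [|eauto].
    destruct (fna_some _ _ E) as [HX HA]. pose proof (fsize_pos _ HA).
    pose proof (weight_remove_lt X l HX); lia.
  - intros Hw Hf; simpl; destruct (first_nonatomic l) as [X|] eqn:E; [tauto|eauto].
  - intros Hw [A [HA HvA]]; simpl; destruct (first_nonatomic l) as [X|] eqn:E; [|eauto].
    destruct (fna_some _ _ E) as [HX HXA]. wr HX.
    destruct (form_eq_dec A X) as [<-|Hne].
    + destruct A as [p|  |X1 X2|X1 X2|X1 X2]; try exact I; simpl in HvA, H |- *.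
      * discriminate.
      * apply andb_true_iff in HvA; destruct HvA.
        split; apply IHT; auto; simpl; try lia.
        exists X1; simpl; auto. exists X2; simpl; auto.
      * apply IHT; auto; simpl; try lia.
        apply orb_true_iff in HvA; destruct HvA; [exists X1|exists X2]; simpl; auto.
      * intros C' HC' Th Hs. destruct (eval v X2) eqn:E2.
        -- apply IHT; eauto using ext_trans.
           rewrite weight_app, weight_atomsF; simpl; lia.
           exists X2; split; auto; apply in_app_iff; right; left; auto.
        -- assert (E1 : eval v X1 = false) by (destruct (eval v X1); simpl in *; congruence).
           destruct (classic (exists p, In p Th /\ v p = true)) as [[p [Hp Hvp]]|Hno].
           ++ apply IHT; eauto using ext_trans.
              rewrite weight_app, weight_atomsF; simpl; lia.
              exists (Atom p); split; auto; apply in_app_iff; left; apply in_atomsF; auto.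
           ++ apply incons; [|rewrite weight_app, weight_atomsF; simpl; lia].
              apply (IHF C' (atomsF Th ++ [X1])); [eauto using ext_trans| rewrite weight_app, weight_atomsF; simpl; lia | |exact Hs].
              intros B0 HB. apply in_app_iff in HB as [HB|[<-|[]]]; auto.
              unfold atomsF in HB; apply in_map_iff in HB as [p [<- Hp]]; simpl.
              destruct (v p) eqn:Ev; auto. exfalso; apply Hno; eauto.
    + assert (HG : In A (remove form_eq_dec X l)) by (apply in_in_remove; auto).
      destruct X as [p|  |X1 X2|X1 X2|X1 X2]; try exact I; simpl in H |- *.
      * apply IHT; auto; try lia; eauto.
      * split; apply IHT; auto; simpl; try lia; exists A; simpl; auto.
      * apply IHT; auto; simpl; try lia; exists A; simpl; auto.
      * intros C' HC' Th Hs. apply IHT; eauto using ext_trans.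
        rewrite weight_app, weight_atomsF; simpl; lia.
        exists A; split; auto; apply in_app_iff; right; right; auto.
  - intros Hw Hf; simpl; destruct (first_nonatomic l) as [X|] eqn:E; [|eauto].
    destruct (fna_some _ _ E) as [HX HXA]. wr HX.
    assert (HfG : forall A, In A (remove form_eq_dec X l) -> eval v A = false)
      by (intros A HA; apply in_remove in HA; apply Hf; tauto).
    pose proof (Hf X HX) as HvX.
    destruct X as [p|  |X1 X2|X1 X2|X1 X2]; simpl in HvX, H |- *.
    + exfalso; eapply HXA; eauto.
    + apply IHF; auto; lia.
    + intros [H1 H2]. destruct (eval v X1) eqn:E1.
      * apply IHF in H2; auto. simpl; lia. intros A [<-|HA]; auto.
      * apply IHF in H1; auto. simpl; lia. intros A [<-|HA]; auto.
    + apply orb_false_iff in HvX as [E1 E2].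
      apply IHF; auto. simpl; lia. intros A [<-|[<-|HA]]; auto.
    + intros Hs.
      assert (E1 : eval v X1 = true) by (destruct (eval v X1); simpl in *; congruence).
      assert (E2 : eval v X2 = false) by (destruct (eval v X2), (eval v X1); simpl in *; congruence).
      specialize (Hs C (fun r h => h) []).
      simpl in Hs. apply (IHF C (X2 :: remove form_eq_dec (Imp X1 X2) l)); [exact HC| simpl; lia | |apply Hs].
      * intros A [<-|HA]; auto.
      * apply IHT; auto. simpl; lia. exists X1; simpl; auto.
Qed.

Lemma in_rem_iff y X l : In y (remove form_eq_dec X l) <-> In y l /\ y <> X.
Proof. split; [apply in_remove|intros [H1 H2]; apply in_in_remove; auto]. Qed.

Ltac sq X := let y := fresh "y" in repeat match goal with x := _ |- _ => subst x end; intro y; simpl; rewrite ?in_app_iff, ?in_rem_iff;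
  destruct (form_eq_dec y X); [subst|]; intuition (subst; auto; try congruence).
Ltac sq2 := let y := fresh "y" in intro y; rewrite ?in_app_iff; tauto.

Definition falsif v (G D : list form) :=
  (forall A, In A G -> eval v A = true) /\ (forall A, In A D -> eval v A = false).

Lemma compl : forall m G D, weight G + weight D = m -> CLp G D \/ exists v, falsif v G D.
Proof.
  intro m; induction m as [m IH] using lt_wf_ind; intros G D Hm.
  destruct (first_nonatomic G) as [X|] eqn:EG.
  { destruct (fna_some _ _ EG) as [HX HXA]. pose proof (weight_remove_lt _ _ HX) as Hr.
    set (G' := remove form_eq_dec X G) in *.
    assert (HG' : forall A, In A G -> A <> X -> In A G') by (intros; apply in_rem_iff; auto).
    destruct X as [p| |X1 X2|X1 X2|X1 X2]; simpl in Hr.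
    - exfalso; eapply HXA; eauto.
    - left. eapply c_set; [apply (c_Lbot G D)| sq Bot | apply seteq_refl].
    - destruct (IH (weight (X1::X2::G') + weight D) ltac:(simpl; lia) (X1::X2::G') D eq_refl)
        as [Hc|[v [H1 H2]]].
      + left; eapply c_set; [apply c_Land; exact Hc | sq (And X1 X2) | apply seteq_refl].
      + right; exists v; split; auto. intros A HA; destruct (form_eq_dec A (And X1 X2)).
        * subst; simpl; rewrite (H1 X1), (H1 X2); simpl; auto.
        * apply H1; simpl; auto.
    - destruct (IH (weight (X1::G') + weight D) ltac:(simpl; lia) (X1::G') D eq_refl)
        as [Hc|[v [H1 H2]]].
      + destruct (IH (weight (X2::G') + weight D) ltac:(simpl; lia) (X2::G') D eq_refl)
          as [Hc'|[v [H1 H2]]].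
        * left; eapply c_set; [apply c_Lor; [exact Hc|exact Hc'] | sq (Or X1 X2) | sq2].
        * right; exists v; split; auto. intros A HA; destruct (form_eq_dec A (Or X1 X2)).
          -- subst; simpl; rewrite (H1 X2); simpl; auto; apply orb_true_r.
          -- apply H1; simpl; auto.
      + right; exists v; split; auto. intros A HA; destruct (form_eq_dec A (Or X1 X2)).
        * subst; simpl; rewrite (H1 X1); simpl; auto.
        * apply H1; simpl; auto.
    - destruct (IH (weight G' + weight (X1::D)) ltac:(simpl; lia) G' (X1::D) eq_refl)
        as [Hc|[v [H1 H2]]].
      + destruct (IH (weight (X2::G') + weight D) ltac:(simpl; lia) (X2::G') D eq_refl)
          as [Hc'|[v [H1 H2]]].
        * left; eapply c_set; [apply c_Limp; [exact Hc|exact Hc'] | sq (Imp X1 X2) | sq2].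
        * right; exists v; split; auto. intros A HA; destruct (form_eq_dec A (Imp X1 X2)).
          -- subst; simpl; rewrite (H1 X2); simpl; auto; apply implb_true_r.
          -- apply H1; simpl; auto.
      + right; exists v; split; [|intros; apply H2; simpl; auto].
        intros A HA; destruct (form_eq_dec A (Imp X1 X2)).
        * subst; simpl; rewrite (H2 X1); simpl; auto.
        * apply H1; simpl; auto. }
  destruct (first_nonatomic D) as [X|] eqn:ED.
  { destruct (fna_some _ _ ED) as [HX HXA]. pose proof (weight_remove_lt _ _ HX) as Hr.
    set (D' := remove form_eq_dec X D) in *.
    assert (HD' : forall A, In A D -> A <> X -> In A D') by (intros; apply in_rem_iff; auto).
    destruct X as [p| |X1 X2|X1 X2|X1 X2]; simpl in Hr.
    - exfalso; eapply HXA; eauto.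
    - destruct (IH (weight G + weight D') ltac:(simpl; lia) G D' eq_refl) as [Hc|[v [H1 H2]]].
      + left; eapply c_set; [apply c_Rbot; exact Hc| apply seteq_refl | sq Bot].
      + right; exists v; split; auto. intros A HA; destruct (form_eq_dec A Bot).
        * subst; reflexivity.
        * apply H2; simpl; auto.
    - destruct (IH (weight G + weight (X1::D')) ltac:(simpl; lia) G (X1::D') eq_refl)
        as [Hc|[v [H1 H2]]].
      + destruct (IH (weight G + weight (X2::D')) ltac:(simpl; lia) G (X2::D') eq_refl)
          as [Hc'|[v [H1 H2]]].
        * left; eapply c_set; [apply c_Rand; [exact Hc|exact Hc'] | sq2 | sq (And X1 X2)].
        * right; exists v; split; auto. intros A HA; destruct (form_eq_dec A (And X1 X2)).
          -- subst; simpl; rewrite (H2 X2); simpl; auto; apply andb_false_r.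
          -- apply H2; simpl; auto.
      + right; exists v; split; auto. intros A HA; destruct (form_eq_dec A (And X1 X2)).
        * subst; simpl; rewrite (H2 X1); simpl; auto.
        * apply H2; simpl; auto.
    - destruct (IH (weight G + weight (X1::X2::D')) ltac:(simpl; lia) G (X1::X2::D') eq_refl)
        as [Hc|[v [H1 H2]]].
      + left; eapply c_set; [apply c_Ror; exact Hc | apply seteq_refl | sq (Or X1 X2)].
      + right; exists v; split; auto. intros A HA; destruct (form_eq_dec A (Or X1 X2)).
        * subst; simpl; rewrite (H2 X1), (H2 X2); simpl; auto.
        * apply H2; simpl; auto.
    - destruct (IH (weight (X1::G) + weight (X2::D')) ltac:(simpl; lia) (X1::G) (X2::D') eq_refl)
        as [Hc|[v [H1 H2]]].
      + left; eapply c_set; [apply c_Rimp; exact Hc | apply seteq_refl | sq (Imp X1 X2)].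
      + right; exists v; split; [intros; apply H1; simpl; auto|].
        intros A HA; destruct (form_eq_dec A (Imp X1 X2)).
        * subst; simpl; rewrite (H1 X1), (H2 X2); simpl; auto.
        * apply H2; simpl; auto. }
  destruct (classic (exists p, In (Atom p) G /\ In (Atom p) D)) as [[p [Hp1 Hp2]]|Hno].
  - left; eapply c_set; [apply (c_init G D (Atom p)) | sq (Atom p) | sq (Atom p)].
  - right; exists (fun p => if in_dec form_eq_dec (Atom p) G then true else false); split.
    + intros A HA; destruct (fna_none _ EG _ HA) as [p ->]; simpl.
      destruct (in_dec form_eq_dec (Atom p) G); tauto.
    + intros A HA; destruct (fna_none _ ED _ HA) as [p ->]; simpl.
      destruct (in_dec form_eq_dec (Atom p) G); auto. exfalso; eauto.
Qed.

Lemma forall2_nil v l : (forall A, In A l -> eval v A = true) ->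
  Forall2 (fun Th A => supports (Bv v) (atomsF Th ++ [A])) (map (fun _ => @nil atom) l) l
  /\ concat (map (fun _ => @nil atom) l) = [].
Proof.
  induction l as [|a l IHl]; intros H; simpl; [split; constructor|].
  destruct IHl as [H1 H2]; [intros; apply H; simpl; auto|].
  split; [constructor; auto|exact H2].
  unfold supports; simpl. apply (proj1 (TF v _)); [intros r h; exact h| simpl; lia|].
  exists a; split; [left; reflexivity| apply H; left; reflexivity].
Qed.

Theorem theorem3 : forall G D : list form, valid G D -> CLp G D.
Proof.
  intros G D H.
  destruct (compl _ G D eq_refl) as [Hc|[v [HG HD]]]; auto. exfalso.
  assert (Hv : derivable (Bv v) [] []).
  { pose proof (H (Bv v) (fun r h => bv_st v r h)) as Hi. unfold infers in Hi.
    destruct (nodup form_eq_dec G) as [|A0 rest] eqn:EN.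
    - apply (proj2 (TF v (weight D)) (Bv v) D); auto. intros r h; exact h.
    - destruct (forall2_nil v (A0 :: rest)) as [F1 F2].
      { intros A HA. apply HG. rewrite <- EN in HA. apply nodup_In in HA; auto. }
      specialize (Hi (Bv v) (fun r h => h) _ F1). rewrite F2 in Hi. simpl in Hi.
      apply (proj2 (TF v (weight D)) (Bv v) D); auto. intros r h; exact h. }
  apply sound in Hv. destruct Hv as [[p [[] _]]|[p [[] _]]].
Qed.
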